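(* Let $R$ be an affine algebra over a field $K$ with no zero divisors, and let $\overline{V}_1\subseteq V_1\subseteq\overline{V}_2\subseteq V_2\subseteq\cdots\subseteq R$ be finite-dimensional $K$-subspaces such that (a) for every $r\in R$, $\lim_{n}\dim_K(V_nr+V_n)/\dim_K(V_n)=1$; (b) $\lim_n\dim_K(\overline{V}_n)/\dim_K(V_n)=1$; (c) for every finite-dimensional subspace $Z\subseteq R$ there is $k$ with $\overline{V}_n+\overline{V}_nZ\subseteq V_n$ for all $n>k$. Let $\{e_i\}_{i\ge1}$ be a basis of $R$ such that for each $i$, if $\dim_K\overline{V}_i=k_i$ and $\dim_K V_i=l_i$, then $e_1,\dots,e_{k_i}$ is a basis of $\overline{V}_i$ and $e_1,\dots,e_{l_i}$ is a basis of $V_i$. For $0\neq s\in R$ and $k\ge1$ let $$F_k(s)=\{e_j\in V_k: e_js\notin V_k\},\qquad B_k(s)=\{e_j\notin V_k: e_js\in V_k\}.$$ Then $$\lim_{k\to\infty}\frac{|F_k(s)|}{\dim_K(V_k)}=0\quad\text{and}\quad\lim_{k\to\infty}\frac{|B_k(s)|}{\dim_K(V_k)}=0.$$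
   Context: An affine algebra is a finitely generated associative algebra over $K$, not necessarily unital. For subspaces $V,Z$, $VZ$ is the $K$-span of products $vz$. *)

(* Defs.v *)
(* A (possibly non-unital) associative K-algebra is given as an
   lmodType K together with an explicit bilinear associative multiplication. *)
From HB Require Import structures.
From mathcomp Require Import all_boot all_order all_algebra.
From Stdlib Require Import ClassicalEpsilon.
Set Implicit Arguments. Unset Strict Implicit. Unset Printing Implicit Defensive.
Import Order.TTheory GRing.Theory Num.Theory.
Local Open Scope ring_scope.

Section Defs.
Variables (K : fieldType) (R : lmodType K).

Definition spanP (S : R -> Prop) : R -> Prop :=
  fun x => exists s : seq R, (forall y, y \in s -> S y) /\
    exists c : nat -> K, x = \sum_(i < size s) c i *: s`_i.

Definition span (s : seq R) : R -> Prop :=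
  fun x => exists c : nat -> K, x = \sum_(i < size s) c i *: s`_i.

Definition free (s : seq R) : Prop :=
  forall c : nat -> K, \sum_(i < size s) c i *: s`_i = 0 ->
    forall i, (i < size s)%N -> c i = 0.

Definition subspace (W : R -> Prop) : Prop :=
  W 0 /\ forall (a : K) x y, W x -> W y -> W (a *: x + y).

Definition subsp (U W : R -> Prop) : Prop := forall x, U x -> W x.

Definition is_basis_of (W : R -> Prop) (s : seq R) : Prop :=
  free s /\ forall x, W x <-> span s x.

Definition has_dim (W : R -> Prop) (d : nat) : Prop :=
  exists s : seq R, size s = d /\ is_basis_of W s.

Definition findim (W : R -> Prop) : Prop := subspace W /\ exists d, has_dim W d.

(* dim_K W (meaningful when W is finite-dimensional) *)
Definition dimK (W : R -> Prop) : nat :=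
  epsilon (inhabits 0%N) (fun d => has_dim W d).

Definition sumsp (U W : R -> Prop) : R -> Prop :=
  fun x => exists u w, U u /\ W w /\ x = u + w.

Definition prodsp (mul : R -> R -> R) (V Z : R -> Prop) : R -> Prop :=
  spanP (fun x => exists v z, V v /\ Z z /\ x = mul v z).

Definition rmulsp (mul : R -> R -> R) (V : R -> Prop) (r : R) : R -> Prop :=
  spanP (fun x => exists v, V v /\ x = mul v r).

Definition gen_subalg (mul : R -> R -> R) (g : seq R) : R -> Prop :=
  fun x => forall P : R -> Prop, P 0 ->
    (forall (a : K) u v, P u -> P v -> P (a *: u + v)) ->
    (forall u v, P u -> P v -> P (mul u v)) ->
    (forall y, y \in g -> P y) -> P x.

Definition is_algebra (mul : R -> R -> R) : Prop :=
  (forall (a : K) x y z, mul (a *: x + y) z = a *: mul x z + mul y z) /\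
  (forall (a : K) x y z, mul z (a *: x + y) = a *: mul z x + mul z y) /\
  (forall x y z, mul x (mul y z) = mul (mul x y) z).

Definition affine (mul : R -> R -> R) : Prop :=
  exists g : seq R, forall x, gen_subalg mul g x.

Definition no_zero_divisors (mul : R -> R -> R) : Prop :=
  forall x y, mul x y = 0 -> x = 0 \/ y = 0.

(* e : nat -> R is a basis of R (e 0, e 1, ... plays the role of e_1, e_2, ...) *)
Definition basisR (e : nat -> R) : Prop :=
  (forall n, free (mkseq e n)) /\ (forall x, exists n, span (mkseq e n) x).

End Defs.

(* cardinality of a finite set of natural numbers (junk value if infinite) *)
Definition ncard (P : nat -> Prop) : nat :=
  epsilon (inhabits 0%N)
    (fun n => exists s : seq nat, uniq s /\ size s = n /\ forall j, P j <-> j \in s).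

Definition finiteP (P : nat -> Prop) : Prop := exists n, forall j, P j -> (j < n)%N.

Definition lim_to (u : nat -> rat) (l : rat) : Prop :=
  forall eps : rat, 0 < eps -> exists N, forall n, (N <= n)%N -> `|u n - l| < eps.

Definition ratQ (a b : nat) : rat := a%:R / b%:R.

(* Main.v *)
Require Import Defs.
From HB Require Import structures.
From mathcomp Require Import all_boot all_order all_algebra.
From Stdlib Require Import ClassicalEpsilon.
Import Order.TTheory GRing.Theory Num.Theory.
Local Open Scope ring_scope.
Set Implicit Arguments. Unset Strict Implicit. Unset Printing Implicit Defensive.

Lemma free_span_le (K : fieldType) (R : lmodType K) (f w : seq R) :
  Defs.free f -> (forall i, (i < size f)%N -> Defs.span w f`_i) -> (size f <= size w)%N.
Proof.
move=> Hf Hs.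
set m := size f; set l := size w.
pose A i := epsilon (inhabits (fun _ => 0)) (fun c : nat -> K => f`_i = \sum_(j < l) c j *: w`_j).
have HA : forall i, (i < m)%N -> f`_i = \sum_(j < l) A i j *: w`_j.
  move=> i /Hs Hi; exact: (epsilon_spec (inhabits (fun _ => 0)) _ Hi).
pose M := \matrix_(i < m, j < l) A i j.
have rfM : row_free M.
  rewrite -kermx_eq0; apply/eqP/row_matrixP => i; rewrite row0.
  set u := row i (kermx M).
  have uM : u *m M = 0 by apply/sub_kermxP; exact: row_sub.
  apply/rowP => i'; rewrite [RHS]mxE -/u.
  pose c n := if (n < m)%N then u 0 (insubd i n) else 0.
  have := Hf c; rewrite -/m => Hc.
  suff Hsum : \sum_(i0 < m) c i0 *: f`_i0 = 0.
    have := Hc Hsum i' (ltn_ord i'); rewrite /c ltn_ord.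
    have ->: insubd i (val i') = i' by apply: val_inj; rewrite val_insubd ltn_ord.
    done.
  transitivity (\sum_(i0 < m) u 0 i0 *: \sum_(j < l) A i0 j *: w`_j).
    apply: eq_bigr => i0 _.
    rewrite /c ltn_ord; have ->: insubd i (val i0) = i0 by apply: val_inj; rewrite val_insubd ltn_ord.
    by rewrite -HA.
  under eq_bigr => i0 _ do rewrite scaler_sumr.
  rewrite exchange_big /=.
  transitivity (\sum_(j < l) (u *m M) 0 j *: w`_j).
    apply: eq_bigr => j _; rewrite mxE scaler_suml; apply: eq_bigr => i0 _.
    by rewrite /M !mxE scalerA.
  by rewrite uM; apply: big1 => j _; rewrite mxE scale0r.
have := rank_leq_col M; by rewrite (eqP rfM).
Qed.

Lemma free_map_e (K : fieldType) (R : lmodType K) (e : nat -> R) (t : seq nat) :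
  (forall n, Defs.free (mkseq e n)) -> uniq t -> Defs.free (map e t).
Proof.
move=> He Ut c; rewrite size_map => Hsum i Hi.
set N := (\max_(x <- t) x).+1.
have HtN : forall j, j \in t -> (j < N)%N.
  by move=> j jt; rewrite ltnS; exact: (@leq_bigmax_seq _ t xpredT (fun x => x) j jt isT).
pose d j := if j \in t then c (index j t) else 0.
have Hd : \sum_(j < size (mkseq e N)) d j *: (mkseq e N)`_j = 0.
  rewrite size_mkseq.
  transitivity (\sum_(j < N) d j *: e j).
    by apply: eq_bigr => j _; rewrite nth_mkseq.
  rewrite -(big_mkord xpredT (fun j => d j *: e j)).
  transitivity (\sum_(0 <= j < N | j \in t) c (index j t) *: e j).
    rewrite [RHS]big_mkcond /=; apply: eq_bigr => j _; rewrite /d.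
    by case: (j \in t) => //; rewrite scale0r.
  rewrite -big_filter.
  have Hp : perm_eq [seq j <- index_iota 0 N | j \in t] t.
    apply: uniq_perm => //; first by apply: filter_uniq; apply: iota_uniq.
    move=> j; rewrite mem_filter mem_index_iota /=.
    by case jt: (j \in t) => //=; rewrite HtN.
  rewrite (perm_big _ Hp) /= (big_nth 0%N) big_mkord. rewrite -[RHS]Hsum.
  apply: eq_bigr => j _; rewrite (nth_map 0%N) // index_uniq //.
have := He N d Hd (t`_i); rewrite size_mkseq HtN ?mem_nth // => /(_ isT).
by rewrite /d mem_nth // index_uniq.
Qed.

Lemma free_map_lin (K : fieldType) (R : lmodType K) (phi : R -> R) (xs : seq R) :
  (forall a x y, phi (a *: x + y) = a *: phi x + phi y) ->
  (forall x, phi x = 0 -> x = 0) -> Defs.free xs -> Defs.free (map phi xs).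
Proof.
move=> Hl Hi Hf c; rewrite size_map => Hs.
have phi0 : phi 0 = 0.
  have := Hl 1 0 0; rewrite !scale1r addr0 => /(congr1 (fun v => v - phi 0)).
  by rewrite subrr addrK => <-.
have phiD : {morph phi : x y / x + y}.
  by move=> x y; have := Hl 1 x y; rewrite scale1r scale1r.
have phiZ : forall a x, phi (a *: x) = a *: phi x.
  by move=> a x; rewrite -[a *: x]addr0 Hl phi0 addr0.
apply: Hf; apply: Hi; rewrite (big_morph phi phiD phi0) -[RHS]Hs.
by apply: eq_bigr => i _; rewrite phiZ (nth_map 0).
Qed.

Lemma fin_of_bound (P : nat -> Prop) m :
  (forall u, uniq u -> (forall j, j \in u -> P j) -> (size u <= m)%N) -> finiteP P.
Proof.
move=> Hb; apply: NNPP => Hnf.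
have Hex : forall n, exists j, (n <= j)%N /\ P j.
  move=> n; apply: NNPP => Hn; apply: Hnf; exists n => j Pj.
  rewrite ltnNge; apply/negP => nj; apply: Hn; by exists j.
have : forall q, exists u, uniq u /\ size u = q /\ forall j, j \in u -> P j.
  elim=> [|q [u [Uu [Su Pu]]]]; first by exists [::].
  have [j [Hj Pj]] := Hex (\max_(x <- u) x).+1.
  exists (j :: u); split; last split => //.
  - rewrite /= Uu andbT; apply/negP => ju.
    have := @leq_bigmax_seq _ u xpredT (fun x => x) j ju isT; by rewrite leqNgt Hj.
  - by rewrite /= Su.
  - by move=> y; rewrite inE => /orP [/eqP -> // | /Pu].
move=> /(_ m.+1) [u [Uu [Su Pu]]].
by have := Hb u Uu Pu; rewrite Su ltnn.
Qed.

Lemma ncard_le (P : nat -> Prop) n m :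
  (forall j, P j -> (j < n)%N) ->
  (forall u, uniq u -> (forall j, j \in u -> P j) -> (size u <= m)%N) -> (ncard P <= m)%N.
Proof.
move=> Hn Hb.
pose pb j := if excluded_middle_informative (P j) then true else false.
have Hex : exists q, exists s : seq nat, uniq s /\ size s = q /\ forall j, P j <-> j \in s.
  exists (size [seq j <- iota 0 n | pb j]); exists [seq j <- iota 0 n | pb j].
  split; first by apply: filter_uniq; apply: iota_uniq.
  split => // j; rewrite mem_filter mem_iota /pb add0n.
  case: excluded_middle_informative => /= Pj; split => //.
  by move=> _; rewrite Hn.
have [s [Us [Ss Ps]]] := epsilon_spec (inhabits 0%N) _ Hex.
rewrite /ncard -Ss; apply: Hb => // j; by rewrite -Ps.
Qed.

Lemma ratlim (c b l : nat) (eps : rat) : 0 < eps -> (c <= l - b)%N -> (b <= l)%N ->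
  `|ratQ b l - 1| < eps -> `|ratQ c l - 0| < eps.
Proof.
move=> He Hc Hbl H; rewrite subr0 /ratQ.
have [->|l0] := eqVneq l 0%N; first by rewrite invr0 mulr0 normr0.
have lp : 0 < (l%:R : rat) by rewrite ltr0n lt0n.
rewrite ger0_norm ?divr_ge0 ?ler0n //.
apply: le_lt_trans H; rewrite -normrN.
apply: le_trans (ler_norm _).
have -> : - (b%:R / l%:R - 1) = ((l - b)%N%:R / l%:R : rat).
  by rewrite natrB // mulrBl divff ?pnatr_eq0 // opprB.
by rewrite ler_pM2r ?invr_gt0 // ler_nat.
Qed.

Lemma basis_mem (K : fieldType) (R : lmodType K) (e : nat -> R) (W : R -> Prop) n :
  (forall n, Defs.free (mkseq e n)) -> is_basis_of W (mkseq e n) ->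
  forall j, W (e j) <-> (j < n)%N.
Proof.
move=> He [Hf HW].
have H1 : forall j, (j < n)%N -> W (e j).
  move=> j Hj; apply/HW; exists (fun i => (i == j)%:R).
  rewrite size_mkseq (bigD1 (Ordinal Hj)) //= big1 ?addr0.
    by rewrite nth_mkseq // eqxx scale1r.
  move=> i /negbTE Hi; have -> : (val i == j) = false.
    by apply/negbTE; apply: contraFN Hi => /eqP Hv; apply/eqP/val_inj.
  by rewrite scale0r.
move=> j; split => [Wj|]; last exact: H1.
rewrite ltnNge; apply/negP => nj.
set u := rcons (iota 0 n) j.
have Uu : uniq u.
  by rewrite rcons_uniq iota_uniq andbT mem_iota /= add0n -leqNgt.
have := free_span_le (free_map_e He Uu) (w := mkseq e n).
rewrite size_map size_mkseq /u size_rcons size_iota ltnn => H; have : false; last by []; apply: H.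
move=> i Hi; have Hi' : (i < size u)%N by rewrite /u size_rcons size_iota.
rewrite (nth_map 0%N) //; apply/HW.
have : nth 0%N u i \in u by apply: mem_nth.
rewrite /u mem_rcons inE => /orP [/eqP -> //| ].
by rewrite mem_iota add0n => /andP [_ /H1].
Qed.

Theorem lemma4 (K : fieldType) (R : lmodType K) (mul : R -> R -> R)
  (Halg : is_algebra mul) (Haff : affine mul) (Hdom : no_zero_divisors mul)
  (Vb V : nat -> R -> Prop)
  (HVbfin : forall n, findim (Vb n)) (HVfin : forall n, findim (V n))
  (Hchain1 : forall n, subsp (Vb n) (V n))
  (Hchain2 : forall n, subsp (V n) (Vb n.+1))
  (Ha : forall r : R, lim_to (fun n => ratQ (dimK (sumsp (rmulsp mul (V n) r) (V n)))
                                            (dimK (V n))) 1)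
  (Hb : lim_to (fun n => ratQ (dimK (Vb n)) (dimK (V n))) 1)
  (Hc : forall Z : R -> Prop, findim Z -> exists k, forall n, (k < n)%N ->
          subsp (sumsp (Vb n) (prodsp mul (Vb n) Z)) (V n))
  (e : nat -> R) (He : basisR e)
  (HeV : forall i, is_basis_of (Vb i) (mkseq e (dimK (Vb i))) /\
                   is_basis_of (V i) (mkseq e (dimK (V i))))
  (s : R) (Hs : s != 0) :
  let F k := fun j : nat => V k (e j) /\ ~ V k (mul (e j) s) in
  let B k := fun j : nat => ~ V k (e j) /\ V k (mul (e j) s) in
  (forall k, finiteP (F k) /\ finiteP (B k)) /\
  lim_to (fun k => ratQ (ncard (F k)) (dimK (V k))) 0 /\
  lim_to (fun k => ratQ (ncard (B k)) (dimK (V k))) 0.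
Proof.
move=> F B.
have HV k j : V k (e j) <-> (j < dimK (V k))%N := basis_mem He.1 (HeV k).2 j.
have HVb k j : Vb k (e j) <-> (j < dimK (Vb k))%N := basis_mem He.1 (HeV k).1 j.
have Hbl k : (dimK (Vb k) <= dimK (V k))%N.
  case E: (dimK (Vb k)) => [//|m].
  have : (m < dimK (Vb k))%N by rewrite E.
  by move/HVb/Hchain1/HV.
have Hlin a x y : mul (a *: x + y) s = a *: mul x s + mul y s := Halg.1 a x y s.
have Hinj x : mul x s = 0 -> x = 0.
  by move/Hdom => [//|s0]; move: Hs; rewrite s0 eqxx.
have Hbound k u : uniq u -> (forall j, j \in u -> V k (mul (e j) s)) ->
    (size u <= dimK (V k))%N.
  move=> Uu Hu.
  have := free_span_le (@free_map_lin K R (fun x : R => mul x s) _ Hlin Hinj (free_map_e He.1 Uu))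
    (w := mkseq e (dimK (V k))).
  rewrite !size_map size_iota; apply => i Hi.
  rewrite (nth_map 0) ?size_map // (nth_map 0%N) //; apply/(HeV k).2.2.
  by apply: Hu; apply: mem_nth.
pose Z := Defs.span [:: s].
have HZ : findim Z.
  split.
    split; first by exists (fun _ => 0); rewrite big1 // => i _; rewrite scale0r.
    move=> a x y [cx ->] [cy ->]; exists (fun i => a * cx i + cy i).
    by rewrite !big_ord1 /= scalerDl scalerA.
  exists 1%N; exists [:: s]; split => //; split => // c.
  rewrite big_ord1 /= => /eqP; rewrite scaler_eq0 (negbTE Hs) orbF => /eqP c0 i.
  by rewrite ltnS leqn0 => /eqP ->.
have [K0 HK0] := Hc Z HZ.
have HcK n j : (K0 < n)%N -> (j < dimK (Vb n))%N -> V n (mul (e j) s).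
  move=> Hn Hj; apply: (HK0 n Hn); exists 0, (mul (e j) s); split.
    by case: (HVbfin n) => [[]].
  split; last by rewrite add0r.
  exists [:: mul (e j) s]; split.
    move=> y; rewrite inE => /eqP ->; exists (e j), s; split; first by apply/HVb.
    split => //; exists (fun _ => 1); by rewrite big_ord1 scale1r.
  by exists (fun _ => 1); rewrite big_ord1 scale1r.
have Hfin : forall k, finiteP (F k) /\ finiteP (B k).
  move=> k; split.
    by exists (dimK (V k)) => j [/HV].
  apply: (@fin_of_bound _ (dimK (V k))) => u Uu Hu.
  by apply: Hbound => // j /Hu [].
split => //; split.
  move=> eps He0; have [N1 HN1] := Hb eps He0.
  exists (maxn N1 K0.+1) => k; rewrite geq_max => /andP [k1 k2].
  apply: ratlim He0 _ (Hbl k) (HN1 k k1).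
  apply: (@ncard_le _ (dimK (V k))) => [j [/HV //]|u Uu Hu].
  rewrite -(size_iota (dimK (Vb k)) (dimK (V k) - dimK (Vb k))); apply: uniq_leq_size => // j /Hu [Vj nVj].
  rewrite mem_iota subnKC ?Hbl //; apply/andP; split; last by apply/HV.
  by rewrite leqNgt; apply/negP => /(HcK k j k2).
move=> eps He0; have [N1 HN1] := Hb eps He0.
exists (maxn N1 K0.+1) => k; rewrite geq_max => /andP [k1 k2].
apply: ratlim He0 _ (Hbl k) (HN1 k k1).
have [n Hn] := (Hfin k).2.
apply: (@ncard_le _ n) => // u Uu Hu.
suff H : (size (iota 0 (dimK (Vb k)) ++ u) <= dimK (V k))%N.
  by move: H; rewrite size_cat size_iota => H; rewrite leq_subRL ?Hbl.
apply: Hbound.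
  rewrite cat_uniq iota_uniq Uu andbT /=; apply/hasPn => j /Hu [nVj _].
  rewrite mem_iota /= add0n -leqNgt; apply: leq_trans (Hbl k) _.
  by rewrite leqNgt; apply/negP => /HV.
move=> j; rewrite mem_cat mem_iota add0n /= => /orP [|/Hu [] //].
exact: HcK.
Qed.
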